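(* Let $a,b,q$ be complex numbers with $q\neq 0$. For every formal power series $F(z)\in\mathbb{C}[[z]]$ there is an expansion $$F(z)=\sum_{n=0}^{\infty}c_n\,z^{n}\frac{(az;q)_n}{(bz;q)_n},$$ with coefficients $c_n$ independent of $z$ given by $$c_n=[z^{n}]\Big\{F(z)\frac{(bz;q)_{n-1}}{(az;q)_n}\Big\}-a\sum_{k=0}^{n-1}B_{n-k,1}(a,b)\,q^{(n-k)k}\,[z^{k}]\Big\{F(z)\frac{(bz;q)_{k}}{(az;q)_{k+1}}\Big\},$$ where the numbers $B_{n,1}(a,b)$ ($n\ge 1$) are defined by the expansion in $\mathbb{C}[[z]]$ $$z=\sum_{n=1}^\infty B_{n,1}(a,b)\,z^n\frac{(az;q)_n}{(bz;q)_n}.$$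
   Context: For any integer $n$ (including negative $n$), $(x;q)_n=\prod_{j\ge0}(1-xq^j)/\prod_{j\ge 0}(1-xq^{n+j})$; thus $(x;q)_0=1$, $(x;q)_n=\prod_{j=0}^{n-1}(1-xq^j)$ for $n\ge1$, and $(x;q)_{-1}=1/(1-x/q)$. All such quotients with argument a multiple of $z$ are regarded as formal power series in $z$. For $f(z)=\sum_{n\ge0}a_nz^n\in\mathbb{C}[[z]]$, $[z^n]\{f(z)\}:=a_n$. Empty sums are $0$. The family $\{z^n(az;q)_n/(bz;q)_n\}_{n\ge0}$ is a basis (in the formal-series sense) of $\mathbb{C}[[z]]$, so the $B_{n,1}(a,b)$ are uniquely determined. *)

(* Defs.v *)
(* Formal power series in z over a field R are represented
   by their coefficient sequences  f : nat -> R  (f n = [z^n] f). *)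
From mathcomp Require Import all_boot all_order all_algebra.
Set Implicit Arguments. Unset Strict Implicit. Unset Printing Implicit Defensive.
Import Order.TTheory GRing.Theory Num.Theory.
Local Open Scope ring_scope.

Section FPS.
Variable R : fieldType.

Definition coefz (n : nat) (f : nat -> R) : R := f n.

Definition fps_one : nat -> R := fun n => (n == 0)%:R.
Definition fps_Xn (k : nat) : nat -> R := fun n => (n == k)%:R.
Definition fps_X : nat -> R := fps_Xn 1.

Definition fps_mul (f g : nat -> R) : nat -> R :=
  fun n => \sum_(i < n.+1) f i * g (n - i)%N.

(* first n+1 coefficients of the multiplicative inverse (needs f 0 != 0) *)
Fixpoint inv_upto (f : nat -> R) (n : nat) : seq R :=
  match n with
  | 0 => [:: (f 0%N)^-1]
  | m.+1 => let s := inv_upto f m in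
            rcons s (- (f 0%N)^-1 *
                     \sum_(1 <= i < m.+2) f i * nth 0 s (m.+1 - i)%N)
  end.

Definition fps_inv (f : nat -> R) : nat -> R := fun n => nth 0 (inv_upto f n) n.

Definition fps_div (f g : nat -> R) : nat -> R := fps_mul f (fps_inv g).

Definition fps_lin (c : R) : nat -> R :=
  fun n => if n == 0%N then 1 else if n == 1%N then - c else 0.

Definition fps_prod (s : seq (nat -> R)) : nat -> R := foldr fps_mul fps_one s.

(* (c z; q)_n for an integer n:
   n = m >= 0  :  prod_{j<m} (1 - c q^j z)
   n = -(m+1)  :  1 / prod_{j=0}^{m} (1 - c q^{-(j+1)} z)
   (this is  prod_{j>=0}(1 - x q^j) / prod_{j>=0}(1 - x q^{n+j})  with x = c z) *)
Definition qpoch (c q : R) (n : int) : nat -> R :=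
  match n with
  | Posz m => fps_prod [seq fps_lin (c * q ^+ j) | j <- iota 0 m]
  | Negz m => fps_inv (fps_prod [seq fps_lin (c * q ^- j.+1) | j <- iota 0 m.+1])
  end.

(* The formal series  sum_{n>=0} c_n z^n (a z;q)_n / (b z;q)_n ; the n-th term
   is O(z^n), so the coefficient of z^m only involves n <= m. *)
Definition qexpand (c : nat -> R) (a b q : R) : nat -> R :=
  fun m => \sum_(n < m.+1)
     c n * fps_mul (fps_Xn n) (fps_div (qpoch a q (Posz n)) (qpoch b q (Posz n))) m.

End FPS.

(* Main.v *)
Require Import Defs.
From HB Require Import structures.
From mathcomp Require Import all_boot all_order all_algebra.
From mathcomp Require Import boolp.
From mathcomp Require Import ring zify.
Set Implicit Arguments. Unset Strict Implicit. Unset Printing Implicit Defensive.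
Import Order.TTheory GRing.Theory Num.Theory.
Local Open Scope ring_scope.

Section Fps.
Variable R : fieldType.
Definition fps := nat -> R.
HB.instance Definition _ := gen_eqMixin fps.
HB.instance Definition _ := gen_choiceMixin fps.

Definition fzero : fps := fun _ => 0.
Definition fopp (f : fps) : fps := fun n => - f n.
Definition fadd (f g : fps) : fps := fun n => f n + g n.

Lemma faddA : associative fadd.
Proof. by move=> f g h; apply: funext => n; rewrite /fadd addrA. Qed.
Lemma faddC : commutative fadd.
Proof. by move=> f g; apply: funext => n; rewrite /fadd addrC. Qed.
Lemma fadd0 : left_id fzero fadd.
Proof. by move=> f; apply: funext => n; rewrite /fadd /fzero add0r. Qed.
Lemma faddN : left_inverse fzero fopp fadd.
Proof. by move=> f; apply: funext => n; rewrite /fadd /fzero /fopp addNr. Qed.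
HB.instance Definition _ := GRing.isZmodule.Build fps faddA faddC fadd0 faddN.

Definition tr (n : nat) (f : fps) : {poly R} := \poly_(i < n.+1) f i.

Lemma coef_tr n f i : (i <= n)%N -> (tr n f)`_i = f i.
Proof. by move=> h; rewrite /tr coef_poly ltnS h. Qed.

Lemma mul_tr (f g : nat -> R) n : fps_mul f g n = (tr n f * tr n g)`_n.
Proof.
rewrite coefM /fps_mul; apply: eq_bigr => i _.
by rewrite !coef_tr // ?leq_subr // -ltnS.
Qed.

Lemma coefM_eq (p p' r r' : {poly R}) n :
  (forall i, (i <= n)%N -> p`_i = p'`_i) ->
  (forall i, (i <= n)%N -> r`_i = r'`_i) -> (p * r)`_n = (p' * r')`_n.
Proof.
move=> hp hr; rewrite !coefM; apply: eq_bigr => i _.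
have hi : (i <= n)%N by rewrite -ltnS.
by rewrite (hp _ hi) (hr _ (leq_subr _ _)).
Qed.

Lemma fmulA : associative (@fps_mul R).
Proof.
move=> f g h; apply: funext => n.
rewrite !mul_tr.
transitivity ((tr n f * (tr n g * tr n h))`_n).
  apply: coefM_eq => // i hi; rewrite coef_tr // mul_tr.
  by apply: coefM_eq => j hj; rewrite !coef_tr // (leq_trans hj).
rewrite mulrA; apply: coefM_eq => // i hi; rewrite coef_tr // mul_tr.
by apply: coefM_eq => j hj; rewrite !coef_tr // (leq_trans hj).
Qed.

Lemma fmulC : commutative (@fps_mul R).
Proof. by move=> f g; apply: funext => n; rewrite !mul_tr mulrC. Qed.

Lemma fmul1 : left_id (@fps_one R) (@fps_mul R).
Proof.
move=> f; apply: funext => n; rewrite /fps_mul big_ord_recl /fps_one /= mul1r subn0.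
by rewrite big1 ?addr0 // => i _; rewrite mul0r.
Qed.

Lemma fmulDl : left_distributive (@fps_mul R) (@fadd).
Proof.
move=> f g h; apply: funext => n; rewrite /fps_mul /fadd -big_split /=.
by apply: eq_bigr => i _; rewrite mulrDl.
Qed.

Lemma fone_neq0 : (fps_one R : fps) != (fzero).
Proof.
apply/eqP => h; have := congr1 (fun f => f 0%N) h.
by rewrite /fps_one /fzero /= => /eqP; rewrite oner_eq0.
Qed.

HB.instance Definition _ := GRing.Zmodule_isComNzRing.Build fps fmulA fmulC fmul1 fmulDl fone_neq0.

Lemma fmulE (f g : fps) : f * g = fps_mul f g. Proof. by []. Qed.


Lemma coefD (f g : fps) n : (f + g) n = f n + g n. Proof. by []. Qed.
Lemma coefN (f : fps) n : (- f) n = - f n. Proof. by []. Qed.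
Lemma coefB (f g : fps) n : (f - g) n = f n - g n. Proof. by []. Qed.
Lemma coef0 n : (0 : fps) n = 0. Proof. by []. Qed.
Lemma coef1 n : (1 : fps) n = (n == 0%N)%:R. Proof. by []. Qed.
Lemma coefMf (f g : fps) n : (f * g) n = \sum_(i < n.+1) f i * g (n - i)%N.
Proof. by []. Qed.

Lemma coef_sum I (r : seq I) (P : pred I) (F : I -> fps) n :
  (\sum_(i <- r | P i) F i) n = \sum_(i <- r | P i) F i n.
Proof.
by apply: (big_morph (fun f : fps => f n)) => // f g.
Qed.

Lemma coefM0 (f g : fps) : (f * g) 0%N = f 0%N * g 0%N.
Proof. by rewrite coefMf big_ord1 subn0. Qed.

Definition Xn (k : nat) : fps := fps_Xn R k.

Lemma coefXnM k (g : fps) n :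
  (Xn k * g) n = if (k <= n)%N then g (n - k)%N else 0.
Proof.
rewrite coefMf; case: leqP => hk.
  have hk' : (k < n.+1)%N by rewrite ltnS.
  rewrite (bigD1 (Ordinal hk')) //= /Xn /fps_Xn eqxx mul1r big1 ?addr0 //.
  move=> i hi; rewrite /Xn /fps_Xn; case: eqP => [hik|]; last by rewrite mul0r.
  by case/eqP: hi; apply: val_inj.
rewrite big1 // => i _; rewrite /Xn /fps_Xn; case: eqP => [hik|]; last by rewrite mul0r.
by have := ltn_ord i; rewrite hik ltnS leqNgt hk.
Qed.

Lemma XnD j k : Xn (j + k) = Xn j * Xn k.
Proof.
apply: funext => n; rewrite coefXnM /Xn /fps_Xn.
case: leqP => hj.
  by rewrite -[(n - j == k)%N](eqn_add2l j) subnKC.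
by case: eqP => // hn; move: hj; rewrite hn ltnNge leq_addr.
Qed.

Lemma Xn0 : Xn 0 = 1. Proof. by []. Qed.

Definition C (c : R) : fps := fun n => if n == 0%N then c else 0.

Lemma coefCM c (f : fps) n : (C c * f) n = c * f n.
Proof.
rewrite coefMf big_ord_recl /C /= subn0 big1 ?addr0 // => i _.
by rewrite mul0r.
Qed.

Lemma coefMl_eq (f g h : fps) n :
  (forall i, (i <= n)%N -> f i = g i) -> (f * h) n = (g * h) n.
Proof.
move=> e; rewrite !coefMf; apply: eq_bigr => i _.
by rewrite e // -ltnS.
Qed.

Lemma size_inv_upto (f : fps) n : size (inv_upto f n) = n.+1.
Proof. by elim: n => //= n IH; rewrite size_rcons IH. Qed.

Lemma nth_inv_upto (f : fps) n i : (i <= n)%N -> nth 0 (inv_upto f n) i = fps_inv f i.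
Proof.
elim: n => [|n IH]; first by rewrite leqn0 => /eqP ->.
rewrite leq_eqVlt => /orP [/eqP -> //| hi].
by rewrite /= nth_rcons size_inv_upto hi IH.
Qed.

Lemma fps_inv_rec (f : fps) n :
  fps_inv f n.+1 = - (f 0%N)^-1 * \sum_(1 <= i < n.+2) f i * fps_inv f (n.+1 - i)%N.
Proof.
rewrite {1}/fps_inv /= nth_rcons size_inv_upto ltnn eqxx; congr (_ * _).
rewrite big_nat_cond [RHS]big_nat_cond; apply: eq_bigr => i /andP [/andP [h1 h2] _].
by rewrite nth_inv_upto //; lia.
Qed.

Lemma fps_inv0 (f : fps) : fps_inv f 0%N = (f 0%N)^-1.
Proof. by []. Qed.

Lemma fps_invK (f : fps) : f 0%N != 0 -> (fps_inv f : fps) * f = 1.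
Proof.
move=> h0; apply: funext => n; rewrite mulrC coefMf coef1.
case: n => [|n]; first by rewrite big_ord1 subn0 fps_inv0 mulfV.
rewrite big_ord_recl subn0 fps_inv_rec mulrA mulrN mulfV // mulN1r.
rewrite big_add1 /= big_mkord.
suff -> : \sum_(i < n.+1) f (bump 0 i) * fps_inv f (n.+1 - bump 0 i)%N =
          \sum_(i < n.+1) f i.+1 * fps_inv f (n.+1 - i.+1)%N by rewrite addNr.
by apply: eq_bigr.
Qed.

Definition inv (f : fps) : fps := fps_inv f.
Lemma invK (f : fps) : f 0%N != 0 -> inv f * f = 1.
Proof. exact: fps_invK. Qed.
Lemma inv_uniq (f g : fps) : f 0%N != 0 -> g * f = 1 -> g = inv f.
Proof. by move=> h0 hg; rewrite -[g]mulr1 -(invK h0) mulrCA hg mulr1. Qed.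
Lemma coef0_inv (f : fps) : inv f 0%N = (f 0%N)^-1. Proof. by []. Qed.
Lemma invM (f g : fps) : f 0%N != 0 -> g 0%N != 0 -> inv (f * g) = inv f * inv g.
Proof.
move=> hf hg; symmetry; apply: inv_uniq; first by rewrite coefM0 mulf_neq0.
by rewrite mulrACA invK // invK // mulr1.
Qed.

Definition lin (c : R) : fps := fps_lin c.
Lemma lin0 c : lin c 0%N = 1. Proof. by []. Qed.
Lemma coef_linM c (f : fps) n : (lin c * f) n.+1 = f n.+1 - c * f n.
Proof.
rewrite coefMf big_ord_recl big_ord_recl big1 => [|i _].
  by rewrite /= /lin /fps_lin /= mul1r subn0 addr0 subSS subn0 mulNr.
by rewrite /lin /fps_lin /= mul0r.
Qed.

Lemma prod_cons (x : fps) s : fps_prod (x :: s) = x * fps_prod s. Proof. by []. Qed.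
Lemma prod_nil : fps_prod [::] = (1 : fps). Proof. by []. Qed.
Lemma prod_cat (s1 s2 : seq fps) : fps_prod (s1 ++ s2) = (fps_prod s1 : fps) * fps_prod s2.
Proof.
elim: s1 => [|x s IH]; first by rewrite cat0s prod_nil mul1r.
by rewrite cat_cons !prod_cons IH mulrA.
Qed.
Lemma coef0_prod_lin (s : seq R) : fps_prod [seq lin x | x <- s] 0%N = 1.
Proof.
elim: s => [|x s IH] //.
transitivity ((lin x * fps_prod [seq lin x | x <- s]) 0%N); first by [].
by rewrite coefM0 IH mulr1.
Qed.

Definition sig (t : R) (f : fps) : fps := fun n => t ^+ n * f n.
Lemma coef_sig t f n : sig t f n = t ^+ n * f n. Proof. by []. Qed.
Lemma sigM t (f g : fps) : sig t (f * g) = sig t f * sig t g.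
Proof.
apply: funext => n; rewrite coef_sig !coefMf big_distrr; apply: eq_bigr => i _.
rewrite /sig mulrACA -exprD subnKC //; by rewrite -ltnS.
Qed.
Lemma sig1 t : sig t 1 = 1.
Proof. by apply: funext => -[|n]; rewrite coef_sig coef1 ?expr0 ?mul1r ?mulr0. Qed.
Lemma sig_lin t c : sig t (lin c) = lin (c * t).
Proof.
apply: funext => -[|[|n]]; rewrite coef_sig /lin /fps_lin /=.
- by rewrite expr0 mul1r.
- by rewrite expr1 mulrN mulrC.
- by rewrite mulr0.
Qed.
Lemma sig_prod t (s : seq fps) : sig t (fps_prod s) = fps_prod (map (sig t) s).
Proof.
elim: s => [|x s IH]; first by rewrite prod_nil sig1.
by rewrite map_cons !prod_cons sigM IH.
Qed.
Lemma sig_inv t (f : fps) : f 0%N != 0 -> sig t (inv f) = inv (sig t f).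
Proof.
move=> h0; apply: inv_uniq; first by rewrite coef_sig expr0 mul1r.
by rewrite -sigM invK // sig1.
Qed.

Section Poch.
Variable q : R.
Definition P (c : R) (k : nat) : fps := qpoch c q (Posz k).
Lemma PE c k : P c k = fps_prod [seq lin (c * q ^+ j) | j <- iota 0 k].
Proof. by []. Qed.
Lemma P0 c : P c 0 = 1. Proof. by []. Qed.
Lemma coef0_P c k : P c k 0%N = 1.
Proof. by rewrite PE (map_comp lin (fun j => c * q ^+ j)) coef0_prod_lin. Qed.
Lemma P_neq0 c k : P c k 0%N != 0.
Proof. by rewrite coef0_P oner_neq0. Qed.
Lemma P_split c j e : P c (j + e) = P c j * P (c * q ^+ j) e.
Proof.
rewrite !PE iotaD map_cat prod_cat add0n; congr (_ * _).
rewrite -[j in iota j e]addn0 iotaDl -map_comp; congr fps_prod; apply: eq_map => i /=.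
by rewrite exprD mulrA.
Qed.
Lemma P1 c : P c 1 = lin c.
Proof.
rewrite PE; transitivity (lin (c * q ^+ 0) * 1); first by [].
by rewrite expr0 !mulr1.
Qed.
Lemma sigP t c k : sig t (P c k) = P (c * t) k.
Proof.
rewrite !PE sig_prod -map_comp; congr fps_prod; apply: eq_map => j /=.
by rewrite sig_lin mulrAC.
Qed.

Lemma lin_neq0 c : lin c 0%N != 0. Proof. by rewrite lin0 oner_neq0. Qed.

Lemma P_S c m : P c m.+1 = P c m * lin (c * q ^+ m).
Proof. by rewrite -addn1 P_split P1. Qed.
Lemma P_Sl c m : P c m.+1 = lin c * P (c * q) m.
Proof. by rewrite -add1n P_split P1 expr1. Qed.

Lemma inv_lin c : inv (lin c) = fun n => c ^+ n.
Proof.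
symmetry; apply: inv_uniq; first exact: lin_neq0.
apply: funext => -[|n]; rewrite mulrC.
  by rewrite coefM0 lin0 mul1r expr0.
by rewrite coef_linM exprS subrr.
Qed.

Section XS.
Variables a b : R.
Definition Y m : fps := P b m * inv (P a m.+1).
Definition Xc n m := Y m n.

Lemma Xc_n0 n : Xc n 0 = a ^+ n.
Proof. by rewrite /Xc /Y P0 mul1r P1 inv_lin. Qed.
Lemma Xc_0m m : Xc 0 m = 1.
Proof. by rewrite /Xc /Y coefM0 coef0_inv !coef0_P invr1 mulr1. Qed.

Lemma Y_R1 m : lin (a * q ^+ m.+1) * Y m.+1 = lin (b * q ^+ m) * Y m.
Proof.
rewrite /Y (P_S b) (P_S a m.+1) invM ?P_neq0 ?lin_neq0 //.
rewrite -[RHS]mulr1 -(invK (lin_neq0 (a * q ^+ m.+1))); ring.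
Qed.

Lemma Y_R2 m : lin a * Y m.+1 = lin b * sig q (Y m).
Proof.
rewrite /Y (P_Sl b) (P_Sl a m.+1) invM ?P_neq0 ?lin_neq0 //.
rewrite sigM sig_inv ?P_neq0 // !sigP.
rewrite -[RHS]mulr1 -(invK (lin_neq0 a)); ring.
Qed.

Lemma Xc_R1 n m : Xc n.+1 m.+1 - a * q ^+ m.+1 * Xc n m.+1 = Xc n.+1 m - b * q ^+ m * Xc n m.
Proof. by rewrite /Xc -!coef_linM Y_R1. Qed.

Lemma Xc_R2 n m : Xc n.+1 m.+1 - a * Xc n m.+1 = q ^+ n.+1 * Xc n.+1 m - b * (q ^+ n * Xc n m).
Proof. by rewrite /Xc -[LHS]coef_linM Y_R2 coef_linM !coef_sig. Qed.

Lemma Xc_sym M : forall N, (M <= N)%N -> Xc N M = a ^+ (N - M) * Xc M N.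
Proof.
elim: M => [|M IHM] N hMN.
  by rewrite Xc_n0 Xc_0m subn0 mulr1.
elim: N hMN => [//|N IHN] hMN.
have hMN' : (M <= N)%N by [].
have h1 : a * Xc N M.+1 = a ^+ (N - M) * Xc M.+1 N.
  case: (ltngtP M N) hMN' => // hc _.
    by rewrite IHN // mulrA -exprS subnSK.
  by rewrite -hc subnn expr0 mul1r (IHM M.+1) // subSn // subnn expr1.
rewrite -[Xc N.+1 M.+1](subrK (a * Xc N M.+1)) Xc_R2 h1.
rewrite -[Xc M.+1 N.+1](subrK (a * q ^+ N.+1 * Xc M N.+1)) Xc_R1.
rewrite (IHM N.+1 (leqW hMN')) (IHM N hMN') subSS subSn // (exprS a (N - M)).
ring.
Qed.
End XS.
End Poch.

Section Main.
Variables (a b q : R) (B : nat -> R).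
Hypothesis hB : forall m, fps_X R m = qexpand (fun n => if n == 0%N then 0 else B n) a b q m.
Definition B' n := if n == 0%N then 0 else B n.
Definition phi j : fps := Xn j * (P q a j * inv (P q b j)).
Notation Y := (Y q a b).
Notation Xc := (Xc q a b).

Lemma phi_lt j (H : fps) n : (n < j)%N -> (phi j * H) n = 0.
Proof. by move=> h; rewrite /phi -mulrA coefXnM leqNgt h. Qed.
Lemma phi_lt' j n : (n < j)%N -> phi j n = 0.
Proof. by move=> h; rewrite /phi coefXnM leqNgt h. Qed.
Lemma phi_jj j : phi j j = 1.
Proof. by rewrite /phi coefXnM leqnn subnn coefM0 coef0_inv !coef0_P invr1 mulr1. Qed.

Lemma phiY m i : phi m * Y (m + i) = Xn m * sig (q ^+ m) (Y i).
Proof.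
rewrite /phi /Y sigM sig_inv ?P_neq0 // !sigP -addnS !P_split.
rewrite invM ?P_neq0 //.
rewrite -[RHS]mulr1 -(invK (P_neq0 q a m)) -[RHS]mulr1 -(invK (P_neq0 q b m)).
ring.
Qed.

Lemma coef_phiY m i : (phi m * Y (m + i)) (m + i)%N = (q ^+ m) ^+ i * Xc i i.
Proof. by rewrite phiY coefXnM leq_addr addKn coef_sig. Qed.

Lemma hB' N i : (i <= N)%N -> Xn 1 i = (\sum_(m < N.+1) C (B' m) * phi m) i.
Proof.
move=> hi; have := hB i; rewrite /fps_X /qexpand -/(Xn 1) => ->.
rewrite coef_sum (big_ord_widen N.+1 (fun n => B' n * phi n i)) ?ltnS //.
rewrite big_mkcond; apply: eq_bigr => m _; rewrite coefCM.
by case: ifP => // /negbT; rewrite -leqNgt => hm; rewrite phi_lt' ?mulr0.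
Qed.

Lemma key d : Xc d.+1 d = a * \sum_(i < d.+1) B (d.+1 - i) * q ^+ ((d.+1 - i) * i) * Xc i i.
Proof.
rewrite (@Xc_sym q a b d d.+1 (leqnSn d)) subSnn expr1; congr (_ * _).
have -> : Xc d d.+1 = (Xn 1 * Y d.+1) d.+1 by rewrite coefXnM ltn0Sn subn1.
rewrite (coefMl_eq (g := \sum_(m < d.+2) C (B' m) * phi m)); last by move=> i hi; apply: hB'.
rewrite big_distrl coef_sum big_ord_recl /= -mulrA coefCM /B' eqxx mul0r add0r.
rewrite (reindex_inj rev_ord_inj) /=; apply: eq_bigr => i _.
rewrite -mulrA coefCM /bump /= add1n.
have hi : (i <= d)%N by rewrite -ltnS.
have e : ((d - i).+1 + i = d.+1)%N by lia.
have := coef_phiY (d - i).+1 i; rewrite e => ->.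
rewrite subSS -subSn // -exprM.
by rewrite mulrA.
Qed.

Definition Kb n : fps := qpoch b q (n%:Z - 1).
Lemma Kb_S n : Kb n.+1 = P q b n.
Proof. by rewrite /Kb -addn1 PoszD addrK. Qed.
Lemma coef0_Kb n : Kb n 0%N = 1.
Proof.
case: n => [|n]; last by rewrite Kb_S coef0_P.
rewrite /Kb /= /fps_inv /=.
transitivity (((lin (b / q ^+ 1) * 1) 0%N)^-1); first by [].
by rewrite coefM0 lin0 mulr1 invr1.
Qed.

Definition cc (F : fps) n := (F * (Kb n * inv (P q a n))) n
   - a * \sum_(k < n) B (n - k) * q ^+ ((n - k) * k) * (F * Y k) k.

Lemma dual j n : cc (phi j) n = (j == n)%:R.
Proof.
rewrite /cc; case: (ltngtP n j) => hnj.
- rewrite phi_lt // big1 ?mulr0 ?subr0 ?(gtn_eqF hnj) // => k _.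
  by rewrite phi_lt ?mulr0 //; apply: ltn_trans hnj.
- have [d ed] : exists d, n = (j + d.+1)%N by exists (n - j).-1; lia.
  rewrite /= ?mulr0n ed {ed hnj}.
  rewrite big_split_ord /= big1 ?add0r; last first.
    by move=> k _; rewrite phi_lt ?mulr0.
  under eq_bigr do rewrite coef_phiY subnDl.
  rewrite addnS Kb_S.
  have -> : P q b (j + d) * inv (P q a (j + d).+1) = Y (j + d) by [].
  rewrite phiY coefXnM.
  have h1 : (j <= (j + d).+1)%N by lia.
  have h2 : ((j + d).+1 - j = d.+1)%N by lia.
  rewrite h1 h2 coef_sig -/(Xc d.+1 d) key mulrCA big_distrr /=.
  apply/eqP; rewrite subr_eq0; apply/eqP; congr (_ * _); apply: eq_bigr => i _.
  have hi : (i <= d.+1)%N by apply: ltnW.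
  set e := (d.+1 - i)%N.
  have hexp : (j * d.+1 + e * i = e * (j + i) + j * i)%N by rewrite /e; nia.
  rewrite -!exprM.
  transitivity (B e * Xc i i * q ^+ (j * d.+1 + e * i)); first by rewrite exprD; ring.
  by rewrite hexp exprD; ring.
- subst n; rewrite big1 ?mulr0 ?subr0; last first.
    by move=> k _; rewrite phi_lt ?mulr0.
  have -> : phi j * (Kb j * inv (P q a j)) =
     Xn j * ((inv (P q a j) * P q a j) * (inv (P q b j) * Kb j)) by rewrite /phi; ring.
  by rewrite invK ?P_neq0 // mul1r coefXnM leqnn subnn coefM0 coef0_inv coef0_P coef0_Kb invr1 mulr1.
Qed.

Lemma coefG (e : nat -> R) N (H : fps) n :
  ((\sum_(j < N) C (e j) * phi j) * H) n = \sum_(j < N) e j * (phi j * H) n.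
Proof. rewrite big_distrl coef_sum; apply: eq_bigr => j _ /=. by rewrite -(mulrA (C (e j))) coefCM. Qed.

Lemma cc_lin (e : nat -> R) N n :
  cc (\sum_(j < N) C (e j) * phi j) n = \sum_(j < N) e j * cc (phi j) n.
Proof.
rewrite /cc coefG.
under [X in a * X]eq_bigr do rewrite coefG.
under [RHS]eq_bigr do rewrite mulrBr.
rewrite sumrB; congr (_ - _).
transitivity (\sum_(k < n) \sum_(j < N) a * (B (n - k) * q ^+ ((n - k) * k)) * (e j * (phi j * Y k) k)).
  rewrite big_distrr; apply: eq_bigr => k _ /=; rewrite mulrA big_distrr //=.
rewrite exchange_big; apply: eq_bigr => j _ /=.
rewrite mulrCA big_distrr /= big_distrr; apply: eq_bigr => k _ /=; ring.
Qed.

Lemma cc_loc (F G : fps) n : (forall i, (i <= n)%N -> F i = G i) -> cc F n = cc G n.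
Proof.
move=> h; rewrite /cc (coefMl_eq _ h); congr (_ - _ * _); apply: eq_bigr => k _.
congr (_ * _); apply: coefMl_eq => i hi; apply: h.
by apply: (leq_trans hi); apply: ltnW.
Qed.

Lemma expand (F : fps) N :
  exists e : nat -> R, forall i, (i < N)%N -> F i = (\sum_(j < N) C (e j) * phi j) i.
Proof.
elim: N => [|N [e he]]; first by exists (fun _ => 0).
set v := F N - (\sum_(j < N) C (e j) * phi j) N.
exists (fun j => if j == N then v else e j) => i hi.
rewrite big_ord_recr /= eqxx coefD.
have -> : \sum_(j < N) C (if (widen_ord (leqnSn N) j == N :> nat) then v else e j) * phi (widen_ord (leqnSn N) j)
   = \sum_(j < N) C (e j) * phi j.
  by apply: eq_bigr => j _ /=; rewrite (ltn_eqF (ltn_ord j)).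
rewrite coefCM; move: hi; rewrite ltnS leq_eqVlt => /orP [/eqP ->|hi].
  by rewrite phi_jj mulr1 /v addrC subrK.
by rewrite phi_lt' // mulr0 addr0; apply: he.
Qed.

Lemma main (F : fps) m : F m = \sum_(n < m.+1) cc F n * phi n m.
Proof.
have [e he] := expand F m.+1.
set G := \sum_(j < m.+1) C (e j) * phi j.
have hFG : forall i, (i <= m)%N -> F i = G i by move=> i hi; apply: he.
transitivity (\sum_(n < m.+1) e n * phi n m).
  by rewrite hFG // /G coef_sum; apply: eq_bigr => n _; rewrite coefCM.
apply: eq_bigr => n _; congr (_ * _).
rewrite (cc_loc (G := G)); last first.
  by move=> i hi; apply: hFG; apply: (leq_trans hi); rewrite -ltnS.
rewrite /G cc_lin; under eq_bigr do rewrite dual.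
rewrite (bigD1 n) //= eqxx mulr1 big1 ?addr0 // => j hj.
case: eqP => [hjn|]; last by rewrite mulr0.
by case/eqP: hj; apply: val_inj.
Qed.
End Main.
End Fps.

Unset Implicit Arguments.
Set Strict Implicit.

Theorem theorem1p1 (R : numClosedFieldType) (a b q : R) (F B : nat -> R) :
  q != 0 ->
  (forall m, fps_X R m = qexpand (fun n => if n == 0%N then 0 else B n) a b q m) ->
  forall m, F m =
    qexpand (fun n =>
        coefz n (fps_div (fps_mul F (qpoch b q (n%:Z - 1))) (qpoch a q n%:Z))
        - a * \sum_(k < n) B (n - k)%N * q ^+ ((n - k) * k)
              * coefz k (fps_div (fps_mul F (qpoch b q k%:Z)) (qpoch a q k.+1%:Z)))
      a b q m.
Proof.
move=> _ hB m.
rewrite (@main _ a b q B hB F m) /qexpand; apply: eq_bigr => n _; congr (_ * _).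
rewrite /cc /coefz; congr (_ - _ * _).
  by rewrite mulrA.
by apply: eq_bigr => k _; rewrite /Y mulrA.
Qed.
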